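(* Let $l,l'$ be two nonparallel lines intersecting at a point $O$, and let $X,X'$ be two points lying in the same quadrant divided by $l,l'$. Let $Q(X,X',l,l')$ denote the unique (possibly degenerate) parallelogram that has a pair of opposite corners at $X,X'$ and its other two corners on $l$ and $l'$ respectively. Let $\theta$ denote the angle of the quadrant divided by $l,l'$ that contains $X,X'$. Then \begin{equation*} Area\left(Q(X,X',l,l')\right)=\left| d_l(X)\,d_{l'}(X)-d_l(X')\,d_{l'}(X')\right| / \sin \theta, \end{equation*} where $d_l(Z)$ denotes the distance from a point $Z$ to the line $l$.
   Context: Concretely, $Q(X,X',l,l')$ is constructed as follows: let $M$ be the midpoint of $X$ and $X'$; let $Y$ be the intersection of $l$ with the reflection of $l'$ about $M$, and $Y'$ the intersection of $l'$ with the reflection of $l$ about $M$. Then $Y,Y'$ is the unique pair of points with $Y\in l$, $Y'\in l'$ and midpoint $M$, so $XYX'Y'$ is a parallelogram (possibly degenerate, i.e., with all four corners on one line), and it is the unique such parallelogram with opposite corners $X,X'$ and the other two corners on $l,l'$ respectively. The quantity $d_l(Z)\,d_{l'}(Z)$ is called the distance-product of $Z$ to the lines $l,l'$. *)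

(* Defs.v *)
From HB Require Import structures.
From mathcomp Require Import all_boot all_order all_algebra.
From mathcomp Require Import all_classical all_reals all_analysis.
Set Implicit Arguments. Unset Strict Implicit. Unset Printing Implicit Defensive.
Import Order.TTheory GRing.Theory Num.Theory.
Local Open Scope classical_set_scope.
Local Open Scope ring_scope.

Section Plane.
Variable R : realType.
Definition plane_pt := (R * R)%type.

Definition padd (p q : plane_pt) : plane_pt := (p.1 + q.1, p.2 + q.2).
Definition psub (p q : plane_pt) : plane_pt := (p.1 - q.1, p.2 - q.2).
Definition pscale (t : R) (p : plane_pt) : plane_pt := (t * p.1, t * p.2).
Definition dot (p q : plane_pt) : R := p.1 * q.1 + p.2 * q.2.
Definition cross (p q : plane_pt) : R := p.1 * q.2 - p.2 * q.1.
Definition pnorm (p : plane_pt) : R := Num.sqrt (dot p p).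

Definition is_line (l : set plane_pt) : Prop :=
  exists P d : plane_pt, d != (0, 0) /\ l = [set Z | exists t : R, Z = padd P (pscale t d)].

Definition parallel (l l' : set plane_pt) : Prop :=
  exists v : plane_pt, l' = [set padd Z v | Z in l].

Definition same_side (l : set plane_pt) (A B : plane_pt) : Prop :=
  ~ l A /\ ~ l B /\
  forall t : R, 0 <= t <= 1 -> ~ l (padd A (pscale t (psub B A))).

Definition same_quadrant (l l' : set plane_pt) (A B : plane_pt) : Prop :=
  same_side l A B /\ same_side l' A B.

Definition dist_line (l : set plane_pt) (Z : plane_pt) : R :=
  inf [set pnorm (psub Z Y) | Y in l].

Definition angle (A O B : plane_pt) : R :=
  acos (dot (psub A O) (psub B O) / (pnorm (psub A O) * pnorm (psub B O))).

(* area of the (possibly degenerate) parallelogram with consecutive corners X, Y, X', Y' *)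
Definition para_area (X Y X' Y' : plane_pt) : R :=
  `| cross (psub Y X) (psub Y' X) |.
End Plane.

(* Main.v *)
Require Import Defs.
From HB Require Import structures.
From mathcomp Require Import all_boot all_order all_algebra.
From mathcomp Require Import all_classical all_reals all_analysis.
From mathcomp Require Import ring lra.
Import Order.TTheory GRing.Theory Num.Theory.
Local Open Scope classical_set_scope.
Local Open Scope ring_scope.
Set Implicit Arguments. Unset Strict Implicit.

Lemma dot_pos (R : realType) (u : plane_pt R) : u != (0,0) -> 0 < dot u u.
Proof.
case: u => u1 u2 hu; rewrite /dot /=.
have [e1|h1] := eqVneq u1 0.
  have h2 : u2 != 0 by apply: contraNneq hu => ->; rewrite e1.
  rewrite e1.
  move: h2; rewrite neq_lt => /orP[] h; nra.
move: h1; rewrite neq_lt => /orP[] h; nra.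
Qed.

Lemma cross_zero_scale (R : realType) (w u : plane_pt R) : u != (0,0) ->
  cross w u = 0 -> w = pscale (dot w u / dot u u) u.
Proof.
move=> hu; have := @dot_pos _ u hu; case: u hu => u1 u2 hu; case: w => w1 w2.
rewrite /cross /dot /pscale /= => hD h.
have hD0 : u1 * u1 + u2 * u2 != 0 by rewrite gt_eqF.
congr pair; apply/eqP; rewrite -subr_eq0; apply/eqP.
  have -> : w1 - (w1 * u1 + w2 * u2) / (u1 * u1 + u2 * u2) * u1 =
      u2 * (w1 * u2 - w2 * u1) / (u1 * u1 + u2 * u2) by field.
  by rewrite h mulr0 mul0r.
have -> : w2 - (w1 * u1 + w2 * u2) / (u1 * u1 + u2 * u2) * u2 =
    - u1 * (w1 * u2 - w2 * u1) / (u1 * u1 + u2 * u2) by field.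
by rewrite h mulr0 mul0r.
Qed.

Lemma line_char (R : realType) (l : set (plane_pt R)) O : is_line l -> l O ->
  exists u : plane_pt R, u != (0,0) /\ forall Z, l Z <-> cross (psub Z O) u = 0.
Proof.
case=> P [d [hd ->]] /= [t0 ->]; exists d; split => // Z; split.
  by case=> t ->; rewrite /cross /psub /padd /pscale /=; ring.
move=> h; have := cross_zero_scale hd h.
move: (_ / _) => k e; exists (t0 + k).
move: e; case: Z {h} => z1 z2; case: P => p1 p2; case: d {hd} => d1 d2.
rewrite /psub /padd /pscale /= => -[e1 e2]; congr pair; lra.
Qed.

Lemma cross_par (R : realType) (w u v : plane_pt R) : v != (0,0) ->
  cross w v = 0 -> cross u v = 0 -> cross w u = 0.
Proof.
case: v => v1 v2; case: w => w1 w2; case: u => u1 u2; rewrite /cross /= => hv h1 h2.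
have e1 : (w1 * u2 - w2 * u1) * v1 = 0.
  have -> : (w1 * u2 - w2 * u1) * v1 = (w1 * v2 - w2 * v1) * u1 - (u1 * v2 - u2 * v1) * w1 by ring.
  by rewrite h1 h2 !mul0r subr0.
have e2 : (w1 * u2 - w2 * u1) * v2 = 0.
  have -> : (w1 * u2 - w2 * u1) * v2 = (w1 * v2 - w2 * v1) * u2 - (u1 * v2 - u2 * v1) * w2 by ring.
  by rewrite h1 h2 !mul0r subr0.
apply/eqP; apply: contraNT hv => hc.
move/eqP: e1; rewrite mulf_eq0 (negbTE hc) /= => /eqP ->.
move/eqP: e2; rewrite mulf_eq0 (negbTE hc) /= => /eqP -> //.
Qed.


Lemma sqrt_eq (R : realType) (a x : R) : 0 <= x -> a = x ^+ 2 -> Num.sqrt a = x.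
Proof. by move=> hx ->; rewrite sqrtr_sqr ger0_norm. Qed.

Lemma sqrt_ge (R : realType) (a x : R) : 0 <= x -> x ^+ 2 <= a -> x <= Num.sqrt a.
Proof. by move=> hx h; rewrite -(sqrt_eq hx (erefl _)); apply: ler_wsqrtr. Qed.

Lemma pnorm_gt0 (R : realType) (u : plane_pt R) : u != (0,0) -> 0 < pnorm u.
Proof. by move=> hu; rewrite /pnorm sqrtr_gt0 dot_pos. Qed.

Lemma pnorm_sq (R : realType) (u : plane_pt R) : pnorm u ^+ 2 = dot u u.
Proof.
rewrite /pnorm sqr_sqrtr // /dot; case: u => a b /=.
by rewrite addr_ge0 // -expr2 sqr_ge0.
Qed.

Lemma dist_char (R : realType) (l : set (plane_pt R)) O u : u != (0,0) ->
  (forall Z, l Z <-> cross (psub Z O) u = 0) ->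
  forall Z, dist_line l Z = `|cross (psub Z O) u| / pnorm u.
Proof.
move=> hu hl Z.
have hn := pnorm_gt0 hu.
have hD := dot_pos hu.
set m := _ / _.
have hm0 : 0 <= m by rewrite divr_ge0 // ltW.
have m2 : m ^+ 2 = cross (psub Z O) u ^+ 2 / dot u u.
  by rewrite /m expr_div_n pnorm_sq real_normK // num_real.
set Y0 := padd O (pscale (dot (psub Z O) u / dot u u) u).
have hY0 : l Y0.
  apply/hl; rewrite /Y0; case: (O) => o1 o2; case: (u) => u1 u2.
  rewrite /cross /psub /padd /pscale /=; ring.
have hlb : lbound [set pnorm (psub Z Y) | Y in l] m.
  move=> _ [Y hY <-]; apply: sqrt_ge => //.
  move/hl: hY; rewrite m2 ler_pdivrMr //.
  case: (Z) => z1 z2; case: (Y) => y1 y2; case: (O) => o1 o2; case: (u) hD => u1 u2 hD.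
  rewrite /cross /psub /dot /= => hY.
  have -> : ((z1 - o1) * u2 - (z2 - o2) * u1) = ((z1 - y1) * u2 - (z2 - y2) * u1) by lra.
  rewrite [X in _ <= X](_ : _ = ((z1-y1)*u1 + (z2-y2)*u2)^+2 + ((z1 - y1) * u2 - (z2 - y2) * u1)^+2); last by ring.
  by rewrite -subr_ge0 addrK sqr_ge0.
apply/eqP; rewrite eq_le; apply/andP; split.
  have := @ge_inf _ [set pnorm (psub Z Y) | Y in l].
  move=> /(_ (ex_intro _ m hlb)); apply; exists Y0 => //.
  apply: sqrt_eq => //; rewrite m2 /Y0.
  case: (Z) => z1 z2; case: (O) => o1 o2; case: (u) hD => u1 u2 hD.
  rewrite /cross /psub /padd /pscale /dot /= in hD *.
  field. by rewrite gt_eqF.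
apply: lb_le_inf => //; exists (pnorm (psub Z Y0)); exists Y0 => //.
Qed.


Lemma side_sign (R : realType) (l : set (plane_pt R)) O u X X' :
  (forall Z, l Z <-> cross (psub Z O) u = 0) -> same_side l X X' ->
  0 < cross (psub X O) u * cross (psub X' O) u.
Proof.
move=> hl [nX [nX' seg]].
have hf : cross (psub X O) u != 0 by apply/eqP => /hl.
have hf' : cross (psub X' O) u != 0 by apply/eqP => /hl.
move: hf hf'.
have aff : forall t, cross (psub (padd X (pscale t (psub X' X))) O) u =
    cross (psub X O) u + t * (cross (psub X' O) u - cross (psub X O) u).
  by move=> t; case: (X) => ? ?; case: (X') => ? ?; case: (O) => ? ?; case: (u) => ? ?;
    rewrite /cross /psub /padd /pscale /=; ring.
move: (cross (psub X O) u) (cross (psub X' O) u) aff => f f' aff hf hf'.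
rewrite ltNge; apply/negP => hle.
have hd : f - f' != 0.
  apply/eqP => e; have ef : f' = f by lra.
  rewrite ef in hle; move: hf; rewrite neq_lt => /orP[] h; nra.
set t := f / (f - f').
have ht : t * (f - f') = f by rewrite /t divfK.
have t01 : 0 <= t <= 1.
  move: hf; rewrite neq_lt => /orP[] h.
    have h' : 0 < f' by move: hf'; rewrite neq_lt => /orP[] h'; nra.
    have hn : f - f' < 0 by lra.
    rewrite /t ler_ndivlMr // ler_ndivrMr //; apply/andP; split; lra.
  have h' : f' < 0 by move: hf'; rewrite neq_lt => /orP[] h'; nra.
  have hp : 0 < f - f' by lra.
  rewrite /t ler_pdivlMr // ler_pdivrMr //; apply/andP; split; lra.
apply: (seg t t01); apply/hl; rewrite aff.
have -> : t * (f' - f) = - (t * (f - f')) by ring.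
by rewrite ht subrr.
Qed.

Lemma nonpar (R : realType) (l l' : set (plane_pt R)) O u v :
  u != (0,0) -> v != (0,0) ->
  (forall Z, l Z <-> cross (psub Z O) u = 0) ->
  (forall Z, l' Z <-> cross (psub Z O) v = 0) ->
  ~ parallel l l' -> cross u v != 0.
Proof.
move=> hu hv hl hl' hnp; apply/eqP => c0; apply: hnp; exists (0,0).
apply/seteqP; split => Z /=.
  move/hl'=> h; exists Z; last by case: Z {h} => a b; rewrite /padd /= !addr0.
  by apply/hl; apply: cross_par hv h c0.
case=> Z0 /hl h <-; apply/hl'.
have -> : psub (padd Z0 (0, 0)) O = psub Z0 O by case: Z0 {h} => a b; rewrite /padd /= !addr0.
apply: cross_par hu h _.
by move: c0; case: (u) => ? ?; case: (v) => ? ?; rewrite /cross /= => c0; lra.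
Qed.


Lemma pnorm_scale (R : realType) (k : R) u : pnorm (pscale k u) = `|k| * pnorm u.
Proof.
apply: sqrt_eq; first by rewrite mulr_ge0 // sqrtr_ge0.
rewrite exprMn real_normK ?num_real // pnorm_sq.
by case: u => a b; rewrite /dot /pscale /=; ring.
Qed.

Lemma scale_ne0 (R : realType) (A O u : plane_pt R) : A <> O ->
  cross (psub A O) u = 0 -> u != (0,0) ->
  exists2 a : R, a != 0 & psub A O = pscale a u.
Proof.
move=> hAO h hu; have e := cross_zero_scale hu h.
move: e; move: (_ / _) => a e; exists a => //.
apply/eqP => a0; apply: hAO; move: e; rewrite a0.
case: (A) => a1 a2; case: (O) => o1 o2; rewrite /psub /pscale /= !mul0r => -[e1 e2].
by congr pair; lra.
Qed.

Lemma sin_angle (R : realType) (A O B u v : plane_pt R) :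
  u != (0,0) -> v != (0,0) -> cross (psub A O) u = 0 -> cross (psub B O) v = 0 ->
  A <> O -> B <> O ->
  sin (angle A O B) = `|cross u v| / (pnorm u * pnorm v).
Proof.
move=> hu hv hA hB hAO hBO.
have [a a0 ea] := scale_ne0 hAO hA hu.
have [b b0 eb] := scale_ne0 hBO hB hv.
have nu := pnorm_gt0 hu; have nv := pnorm_gt0 hv.
have Du := dot_pos hu; have Dv := dot_pos hv.
rewrite /angle ea eb !pnorm_scale.
set r := _ / _.
set s := _ / _.
have hs : 0 <= s by rewrite divr_ge0 // mulr_ge0 // ltW.
have key : 1 - r ^+ 2 = s ^+ 2.
  rewrite /r /s !expr_div_n !exprMn !real_normK ?num_real // !pnorm_sq.
  move: Du Dv; case: (u) => u1 u2; case: (v) => v1 v2.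
  rewrite /dot /cross /pscale /= => Du Dv.
  by field; apply/and4P; split => //; rewrite gt_eqF.
have r1 : -1 <= r <= 1.
  have : r ^+ 2 <= 1 by rewrite -subr_ge0 key sqr_ge0.
  by move=> h; apply/andP; split; nra.
by rewrite sin_acos // key; apply: sqrt_eq.
Qed.


Lemma final_alg (R : realType) (P c f g f' g' nu nv : R) : 0 < nu -> 0 < nv -> c != 0 ->
  0 < f * f' -> 0 < g * g' -> P * c = f * g - f' * g' ->
  `|P| = `| `|f| / nu * (`|g| / nv) - `|f'| / nu * (`|g'| / nv)| / (`|c| / (nu * nv)).
Proof.
move=> hnu hnv hc hf hg e.
have hN : 0 < nu * nv by rewrite mulr_gt0.
have -> : `|f| / nu * (`|g| / nv) - `|f'| / nu * (`|g'| / nv) =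
    (`|f * g| - `|f' * g'|) / (nu * nv).
  by rewrite !normrM; field; apply/andP; split; rewrite gt_eqF.
rewrite normf_div (gtr0_norm hN).
have -> : `| `|f * g| - `|f' * g'| | = `|P * c|.
  rewrite e.
  have hFF : 0 < (f * g) * (f' * g').
    have -> : (f * g) * (f' * g') = (f * f') * (g * g') by ring.
    exact: mulr_gt0.
  move: hFF; move: (f * g) (f' * g') => F F' hFF.
  have [hF|hF|hF] := ltrgt0P F.
  - have hF' : 0 < F' by rewrite -(pmulr_rgt0 _ hF).
    by rewrite (gtr0_norm hF').
  - have hF' : F' < 0 by rewrite -(nmulr_rgt0 _ hF).
    rewrite (ltr0_norm hF').
    have -> : - F - - F' = - (F - F') by ring.
    by rewrite normrN.
  - by rewrite hF mul0r ltxx in hFF.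
rewrite normrM.
have hc' : `|c| != 0 by rewrite normr_eq0.
field; apply/and3P; split => //; rewrite gt_eqF //.
Qed.

Unset Implicit Arguments.

Theorem lemma9 (R : realType) (l l' : set (plane_pt R)) (O X X' : plane_pt R)
  (hl : is_line l) (hl' : is_line l') (hnp : ~ parallel l l')
  (hOl : l O) (hOl' : l' O)
  (hq : same_quadrant l l' X X')
  (Y Y' : plane_pt R) (hY : l Y) (hY' : l' Y')
  (hmid : padd Y Y' = padd X X')
  (A B : plane_pt R) (hA : l A) (hAO : A <> O) (hAs : same_side l' A X)
  (hB : l' B) (hBO : B <> O) (hBs : same_side l B X) :
  para_area X Y X' Y' =
  `| dist_line l X * dist_line l' X - dist_line l X' * dist_line l' X' |
    / sin (angle A O B).
Proof.
have [u [hu hlu]] := line_char hl hOl.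
have [v [hv hlv]] := line_char hl' hOl'.
have hc := nonpar hu hv hlu hlv hnp.
case: hq => hsl hsl'.
have sf := side_sign hlu hsl.
have sg := side_sign hlv hsl'.
rewrite !(dist_char hu hlu) !(dist_char hv hlv).
rewrite (sin_angle hu hv (proj1 (hlu A) hA) (proj1 (hlv B) hB) hAO hBO).
rewrite /para_area.
apply: final_alg sf sg _ => //; try exact: pnorm_gt0.
have es := cross_zero_scale hu (proj1 (hlu Y) hY).
have et := cross_zero_scale hv (proj1 (hlv Y') hY').
move: (_ / _) es => s es; move: (_ / _) et => t et.
move: hmid es et.
case: (X) => x1 x2; case: (X') => x'1 x'2; case: (Y) => y1 y2; case: (Y') => z1 z2.
case: (O) => o1 o2; case: (u) => u1 u2; case: (v) => v1 v2.
rewrite /padd /psub /pscale /cross /= => -[m1 m2] [s1 s2] [t1 t2].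
have ex1 : x'1 = y1 + z1 - x1 by lra.
have ex2 : x'2 = y2 + z2 - x2 by lra.
have ey1 : y1 = o1 + s * u1 by lra.
have ey2 : y2 = o2 + s * u2 by lra.
have ez1 : z1 = o1 + t * v1 by lra.
have ez2 : z2 = o2 + t * v2 by lra.
rewrite ex1 ex2 ey1 ey2 ez1 ez2; ring.
Qed.
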